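(* Fix an integer precision $p\ge 1$ and let $\epsilon = 2^{-p+1}$. Suppose GDS is $k$-competitive in the following sense: for every request sequence $\tau$ in which every pair has a positive integer cost-to-size ratio, and for every way of breaking ties among pairs of smallest $H$-value, $\mathrm{GDS}(\tau)\le k\cdot \mathrm{OPT}(\tau)$. Then for every request sequence $\sigma$ in which every pair has a positive integer cost-to-size ratio, $\mathrm{CAMP}(\sigma) \le (1+\epsilon)\,k\cdot \mathrm{OPT}(\sigma)$.
   Context: Caching model: a memory of fixed capacity; each key-value pair $q$ has size $\operatorname{size}(q)>0$ and cost $\operatorname{cost}(q)>0$, each pair fits in memory by itself. Requests arrive in sequence; if the requested pair is not in memory (a miss), its cost is paid and it is brought into memory, evicting other pairs as needed so the total size of pairs in memory never exceeds capacity. For an algorithm $A$ and sequence $\sigma$, $A(\sigma)$ is the total cost paid on misses; $\mathrm{OPT}(\sigma)$ is the minimum total cost over all (offline) eviction strategies that know $\sigma$ in advance. GDS: keeps a global $L$ (initially $0$) and $H(q)$ for pairs $q$ in memory. On a request for $q$: if $q$ is in memory, $L\leftarrow\min_{r\in M\setminus\{q\}}H(r)$; otherwise, while there is not enough room for $q$, evict a pair with smallest $H$ and set $L\leftarrow \min_{r\in M}H(r)$, then bring $q$ in; finally $H(q)\leftarrow L+\operatorname{cost}(q)/\operatorname{size}(q)$. Rounding to precision $p$: for a positive integer $x$ whose highest nonzero bit is in position $b$ (positions numbered from $1$ at the lowest-order bit), $\bar x = x$ if $b\le p$, and otherwise $\bar x$ is $x$ with its $b-p$ lowest-order bits set to zero.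 CAMP with precision $p$: on sequence $\sigma$, it makes exactly the eviction decisions GDS makes (with ties among smallest $H$ broken by least-recent request) when each pair's cost-to-size ratio $x=\operatorname{cost}(q)/\operatorname{size}(q)$ is replaced by its rounded value $\bar x$; but on each miss for $q$ it pays the true cost $\operatorname{cost}(q)$. Equivalently, letting $\bar\sigma$ be $\sigma$ with each pair's cost replaced by $\operatorname{size}(q)\cdot\bar x$, CAMP's decisions on $\sigma$ coincide with those of GDS on $\bar\sigma$. *)

(* Defs.v *)
From mathcomp Require Import all_boot all_order all_algebra.
From mathcomp Require Import classical_sets reals.
Set Implicit Arguments. Unset Strict Implicit. Unset Printing Implicit Defensive.
Import Order.TTheory GRing.Theory Num.Theory.
Local Open Scope ring_scope.

Section Caching.
Variables (R : realType) (T : eqType).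

Variables (sz cost : T -> R) (C : R).

(** total size of the pairs in memory (memory is a duplicate-free list) *)
Definition total (M : seq T) : R := \sum_(r <- M) sz r.

(** [opt_run M tau c] : starting with memory [M], some (offline) strategy
    serves [tau] paying total cost [c]. *)
Inductive opt_run : seq T -> seq T -> R -> Prop :=
| opt_nil M : opt_run M [::] 0
| opt_hit M q tau c : q \in M -> opt_run M tau c -> opt_run M (q :: tau) c
| opt_miss M M' q tau c : q \notin M ->
    q \in M' -> uniq M' -> {subset M' <= q :: M} -> total M' <= C ->
    opt_run M' tau c -> opt_run M (q :: tau) (cost q + c).

Definition OPT (tau : seq T) : R := inf [set c | opt_run [::] tau c].

Definition minH (H : T -> R) (s : seq T) : option R :=
  foldr (fun r acc => if acc is Some m then Some (Num.min (H r) m) else Some (H r))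
        None s.

Record gds_state := GState { gM : seq T; gH : T -> R; gL : R }.

Definition gds_init : gds_state := GState [::] (fun _ => 0) 0.

(** eviction loop on a miss for [q]: while there is not enough room, evict
    a pair with smallest H (any such pair: every tie-breaking is allowed)
    and set L to the minimum H over the memory (= H of the evicted pair). *)
Inductive gds_evict (H : T -> R) (q : T) : seq T -> R -> seq T -> R -> Prop :=
| gev_done M L : total M + sz q <= C -> gds_evict H q M L M L
| gev_step M L v M' L' : C < total M + sz q ->
    v \in M -> (forall r, r \in M -> H v <= H r) ->
    gds_evict H q (rem v M) (H v) M' L' -> gds_evict H q M L M' L'.

Inductive gds_step : gds_state -> T -> gds_state -> R -> Prop :=
| gstep_hit M H L q : q \in M ->
    let L' := odflt L (minH H (filter (predC1 q) M)) in
    gds_step (GState M H L) q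
      (GState M (fun r => if r == q then L' + cost q / sz q else H r) L') 0
| gstep_miss M H L q M' L' : q \notin M -> gds_evict H q M L M' L' ->
    gds_step (GState M H L) q
      (GState (q :: M') (fun r => if r == q then L' + cost q / sz q else H r) L')
      (cost q).

Inductive gds_run : gds_state -> seq T -> R -> Prop :=
| grun_nil st : gds_run st [::] 0
| grun_cons st q tau st' a c : gds_step st q st' a -> gds_run st' tau c ->
    gds_run st (q :: tau) (a + c).

End Caching.

(** highest nonzero bit position of x > 0 (positions from 1) *)
Definition hibit (x : nat) : nat := (trunc_log 2 x).+1.

Definition round_prec (p x : nat) : nat :=
  let b := hibit x in
  if (b <= p)%N then x else (x %/ 2 ^ (b - p) * 2 ^ (b - p))%N.

Definition int_cost (R : realType) (T : eqType) (sz : T -> R) (x : T -> nat) (q : T) : R :=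
  sz q * (x q)%:R.

Section CAMP.
Variables (R : realType) (T : eqType).
Variables (sz cost cbar : T -> R) (C : R).
(* [cbar] : rounded costs used for decisions; [cost] : true costs paid *)

Record camp_state := CState { cM : seq T; cH : T -> R; cL : R; clr : T -> nat }.

Definition camp_victim (H : T -> R) (lr : T -> nat) (M : seq T) : option T :=
  foldr (fun r acc => match acc with
                      | None => Some r
                      | Some v => if (H r < H v) || ((H r == H v) && (lr r < lr v)%N)
                                  then Some r else Some v end) None M.

Fixpoint camp_evict (fuel : nat) (H : T -> R) (lr : T -> nat) (q : T)
    (M : seq T) (L : R) : seq T * R :=
  if fuel is fuel'.+1 then
    if total sz M + sz q <= C then (M, L) else
    match camp_victim H lr M with
    | None => (M, L)
    | Some v => camp_evict fuel' H lr q (rem v M) (H v)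
    end
  else (M, L).

Fixpoint camp_go (st : camp_state) (t : nat) (tau : seq T) : R :=
  match tau with
  | [::] => 0
  | q :: tau' =>
    let: CState M H L lr := st in
    let lr' := fun r => if r == q then t else lr r in
    if q \in M then
      let L' := odflt L (minH H (filter (predC1 q) M)) in
      camp_go (CState M (fun r => if r == q then L' + cbar q / sz q else H r) L' lr')
              t.+1 tau'
    else
      let: (M', L') := camp_evict (size M) H lr q M L in
      cost q + camp_go (CState (q :: M')
                         (fun r => if r == q then L' + cbar q / sz q else H r) L' lr')
                       t.+1 tau'
  end.

End CAMP.

Definition CAMP (R : realType) (T : eqType) (p : nat) (sz : T -> R) (x : T -> nat)
    (C : R) (sigma : seq T) : R :=
  camp_go sz (int_cost sz x) (int_cost sz (fun q => round_prec p (x q))) C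
          (CState [::] (fun _ => 0) 0 (fun _ => 0%N)) 1 sigma.

Definition eps (R : realType) (p : nat) : R := (2%:R ^+ p.-1)^-1.

(* Main.v *)
Require Import Defs.
From mathcomp Require Import all_boot all_order all_algebra.
From mathcomp Require Import boolp classical_sets reals.
From mathcomp Require Import zify ring lra.
Import Order.TTheory GRing.Theory Num.Theory.
Local Open Scope ring_scope.

Lemma round_nat (p x : nat) : (1 <= p)%N -> (0 < x)%N ->
  [/\ (0 < round_prec p x)%N, (round_prec p x <= x)%N &
      (x * 2 ^ p.-1 <= round_prec p x * 2 ^ p.-1 + round_prec p x)%N].
Proof.
move=> hp hx; rewrite /round_prec /hibit.
set t := trunc_log 2 x.
have h1 : (2 ^ t <= x)%N by apply: trunc_logP.
have h2 : (x < 2 ^ t.+1)%N by apply: trunc_log_ltn.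
case: ifP => hb.
  split => //; nia.
have ht : t = ((t.+1 - p) + p.-1)%N by lia.
set d := (t.+1 - p)%N.
have hD : (0 < 2 ^ d)%N by rewrite expn_gt0.
have hA : (0 < 2 ^ p.-1)%N by rewrite expn_gt0.
have e1 : (2 ^ t = 2 ^ p.-1 * 2 ^ d)%N by rewrite {1}ht expnD mulnC.
set r := (x %/ 2 ^ d * 2 ^ d)%N.
have r1 : (r <= x)%N by apply: leq_divM.
have r2 : (x < r + 2 ^ d)%N.
  rewrite {1}(divn_eq x (2 ^ d)) ltn_add2l ltn_pmod //.
have r3 : (2 ^ p.-1 <= x %/ 2 ^ d)%N by rewrite leq_divRL // -e1.
have r4 : (2 ^ t <= r)%N by rewrite e1 /r leq_mul2r r3 orbT.
move: r1 r2 r4; rewrite e1.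
move: (2 ^ p.-1)%N (2 ^ d)%N hA hD r => A D hA hD r' r1 r2 r4.
split; nia.
Qed.

Lemma round_real (R : realType) (p x : nat) : (1 <= p)%N -> (0 < x)%N ->
  (x%:R : R) <= (1 + eps R p) * (round_prec p x)%:R.
Proof.
move=> hp hx; have [_ _ h] := round_nat p x hp hx.
rewrite /eps.
set r := round_prec p x in h *.
have hA : (0 : R) < 2%:R ^+ p.-1 by rewrite exprn_gt0.
have e : (2%:R ^+ p.-1 : R) = (2 ^ p.-1)%N%:R by rewrite natrX.
have h' : (x%:R : R) * 2%:R ^+ p.-1 <= r%:R * 2%:R ^+ p.-1 + r%:R.
  by rewrite e -!natrM -natrD ler_nat.
have hi : (2%:R ^+ p.-1 : R) * (2%:R ^+ p.-1)^-1 = 1 by rewrite mulfV // gt_eqF.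
have hi0 : (0 : R) < (2%:R ^+ p.-1)^-1 by rewrite invr_gt0.
move: h' hi hi0 hA; set A := (2%:R ^+ p.-1 : R); set Ai := A^-1.
move=> h' hi hi0 hA.
have := ler_wpM2r (ltW hi0) h'.
rewrite mulrDl -!mulrA hi !mulr1 => H; lra.
Qed.

Section Sim.
Variables (R : realType) (T : eqType) (sz cbar : T -> R) (C : R).

Lemma victim_spec (H : T -> R) lr (M : seq T) : M != [::] ->
  exists v, [/\ camp_victim H lr M = Some v, v \in M & forall r, r \in M -> H v <= H r].
Proof.
elim: M => [//|a M IH] _.
case: (altP (M =P [::])) => [->|hM].
  by exists a; split; rewrite ?mem_seq1 // => r; rewrite mem_seq1 => /eqP ->.
have [v [hv vin vmin]] := IH hM.
rewrite /= -/(camp_victim H lr M) hv.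
case: ifP => hc.
  exists a; split; rewrite ?mem_head // => r; rewrite inE => /orP [/eqP -> //|rin].
  apply: le_trans (vmin _ rin).
  by case/orP: hc => [/ltW //|/andP [/eqP -> _]].
exists v; split => //; first by rewrite inE vin orbT.
move=> r; rewrite inE => /orP [/eqP ->|rin]; last exact: vmin.
by rewrite leNgt; apply/negP => hlt; rewrite hlt in hc.
Qed.

Lemma evict_spec n H lr q M L : (size M <= n)%N -> sz q <= C ->
  gds_evict sz C H q M L (camp_evict sz C n H lr q M L).1 (camp_evict sz C n H lr q M L).2.
Proof.
elim: n M L => [|n IH] M L hs hq /=.
  case: M hs => // _; apply: gev_done; by rewrite /Defs.total big_nil add0r.

case: ifP => htot; first exact: gev_done.
have hM : M != [::] by case: M {hs} htot => //; rewrite /Defs.total big_nil add0r hq.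
have [v [-> vin vmin]] := victim_spec H lr M hM.
apply: gev_step; [by rewrite ltNge htot | exact: vin | exact: vmin | ].
apply: IH => //; rewrite size_rem //; lia.
Qed.

End Sim.

Lemma sim (R : realType) (T : eqType) (sz cost cbar : T -> R) (C a : R) (tau : seq T) :
  0 <= a ->
  (forall q, q \in tau -> [/\ sz q <= C, 0 < cbar q & cost q <= a * cbar q]) ->
  forall M H L lr t, exists cb,
    [/\ gds_run sz cbar C (GState M H L) tau cb,
        camp_go sz cost cbar C (CState M H L lr) t tau <= a * cb,
        0 <= cb &
        forall q tau', tau = q :: tau' -> q \notin M -> 0 < cb].
Proof.
move=> ha; elim: tau => [|q tau IH] hq M H L lr t.
  exists 0; split => //; first exact: grun_nil.
  by rewrite /= mulr0.
have [hq1 hq2 hq3] := hq q (mem_head _ _).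
have hq' : forall r, r \in tau -> [/\ sz r <= C, 0 < cbar r & cost r <= a * cbar r].
  by move=> r rin; apply: hq; rewrite inE rin orbT.
have IH' := IH hq'.
rewrite /=.
case: (boolP (q \in M)) => qM.
  set L' := odflt L (minH H [seq x <- M | predC1 q x]).
  have [cb [r1 r2 r3 _]] := IH' M (fun r => if r == q then L' + cbar q / sz q else H r) L'
     (fun r => if r == q then t else lr r) t.+1.
  exists (0 + cb); split; rewrite ?add0r //.
  - by have := (grun_cons (gstep_hit sz cbar C H L qM) r1); rewrite add0r.
  - by move=> q0 tau' [<- _]; rewrite qM.
case E: camp_evict => [M' L'].
have hev := @evict_spec R T sz C (size M) H lr q M L (leqnn (size M)) hq1.
rewrite E /= in hev.
have [cb [r1 r2 r3 _]] := IH' (q :: M') (fun r => if r == q then L' + cbar q / sz q else H r) L'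
     (fun r => if r == q then t else lr r) t.+1.
exists (cbar q + cb); split.
- exact: (grun_cons (gstep_miss cbar qM hev) r1).
- by rewrite mulrDr lerD.
- by rewrite addr_ge0 // ltW.
- by move=> _ _ _ _; rewrite ltr_pwDl.
Qed.

Section Opt.
Variables (R : realType) (T : eqType) (sz : T -> R) (C : R).

Lemma opt_map (c1 c2 : T -> R) M tau c : opt_run sz c1 C M tau c ->
  exists c', opt_run sz c2 C M tau c' /\
    ((forall q, q \in tau -> c2 q <= c1 q) -> c' <= c).
Proof.
elim => {M tau c}.
- move=> M; exists 0; split => //; exact: opt_nil.
- move=> M q tau c qM _ [c' [h1 h2]]; exists c'; split; first exact: (opt_hit qM h1).
  by move=> h; apply: h2 => r rin; apply: h; rewrite inE rin orbT.
- move=> M M' q tau c qM qM' u sub tot _ [c' [h1 h2]]; exists (c2 q + c'); split.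
    exact: (opt_miss qM qM' u sub tot h1).
  move=> h; apply: lerD; first by apply: h; rewrite mem_head.
  by apply: h2 => r rin; apply: h; rewrite inE rin orbT.
Qed.

Lemma opt_ge0 (c1 : T -> R) M tau c : opt_run sz c1 C M tau c ->
  (forall q, q \in tau -> 0 <= c1 q) -> 0 <= c.
Proof.
elim => {M tau c} // M.
- by move=> q tau c _ _ IH h; apply: IH => r rin; apply: h; rewrite inE rin orbT.
- move=> M' q tau c _ _ _ _ _ _ IH h; apply: addr_ge0; first by apply: h; rewrite mem_head.
  by apply: IH => r rin; apply: h; rewrite inE rin orbT.
Qed.

Lemma OPT_ge0 (c1 : T -> R) tau : (forall q, q \in tau -> 0 <= c1 q) ->
  0 <= OPT sz c1 C tau.
Proof.
move=> h; rewrite /OPT.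
case: (pselect (exists c, opt_run sz c1 C [::] tau c)) => hne.
  apply: lb_le_inf; first by case: hne => c hc; exists c.
  by move=> y hy; exact: (@opt_ge0 c1 [::] tau y hy h).
rewrite (_ : [set c | opt_run sz c1 C [::] tau c]%classic = @set0 R) ?inf0 //.
apply/seteqP; split => c //= hc; apply: hne; by exists c.
Qed.

Lemma OPT_mono (c1 c2 : T -> R) tau : (forall q, q \in tau -> 0 <= c2 q <= c1 q) ->
  OPT sz c2 C tau <= OPT sz c1 C tau.
Proof.
move=> h; rewrite /OPT.
case: (pselect (exists c, opt_run sz c1 C [::] tau c)) => hne.
  apply: lb_le_inf; first by case: hne => c hc; exists c.
  move=> y hy; have [c' [h1 h2]] := @opt_map c1 c2 [::] tau y hy.
  apply: le_trans (h2 _); last by move=> q qin; case/andP: (h q qin).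
  apply: ge_inf => //; exists 0 => z hz; apply: (@opt_ge0 c2 [::] tau z hz) => q qin.
  by case/andP: (h q qin).
rewrite (_ : [set c | opt_run sz c2 C [::] tau c]%classic = @set0 R).
  rewrite (_ : [set c | opt_run sz c1 C [::] tau c]%classic = @set0 R) ?inf0 //.
  apply/seteqP; split => c //= hc; apply: hne; by exists c.
apply/seteqP; split => c //= hc; apply: hne.
have [c' [h1 _]] := @opt_map c2 c1 [::] tau c hc; by exists c'.
Qed.

End Opt.

Theorem mainTheorem3 (R : realType) (T : eqType) (C : R) (p : nat) (k : R)
  (hp : (1 <= p)%N)
  (HGDS : forall (sz' : T -> R) (x' : T -> nat) (tau : seq T),
      (forall q, q \in tau -> [/\ 0 < sz' q, sz' q <= C & (0 < x' q)%N]) ->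
      forall c, gds_run sz' (int_cost sz' x') C (gds_init R T) tau c ->
        c <= k * OPT sz' (int_cost sz' x') C tau)
  (sz : T -> R) (x : T -> nat) (sigma : seq T) :
  (forall q, q \in sigma -> [/\ 0 < sz q, sz q <= C & (0 < x q)%N]) ->
  CAMP p sz x C sigma <= (1 + eps R p) * k * OPT sz (int_cost sz x) C sigma.
Proof.
move=> hs.
set xb := fun q => round_prec p (x q).
have he : 0 < 1 + eps R p by rewrite /eps ltr_wpDr // invr_ge0 exprn_ge0.
have hcond : forall q, q \in sigma -> [/\ sz q <= C, 0 < int_cost sz xb q &
    int_cost sz x q <= (1 + eps R p) * int_cost sz xb q].
  move=> q qin; have [h1 h2 h3] := hs q qin.
  have [r1 r2 r3] := round_nat p (x q) hp h3.
  split => //; rewrite /int_cost /xb.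
    by rewrite mulr_gt0 // ltr0n.
  rewrite mulrCA ler_pM2l //; exact: round_real.
have [cb [r1 r2 r3 r4]] := @sim R T sz (int_cost sz x) (int_cost sz xb) C (1 + eps R p) sigma (ltW he) hcond [::] (fun _ => 0) 0 (fun _ => 0%N) 1.
have hxb : forall q, q \in sigma -> [/\ 0 < sz q, sz q <= C & (0 < xb q)%N].
  move=> q qin; have [h1 h2 h3] := hs q qin.
  by have [r1' _ _] := round_nat p (x q) hp h3.
have hG := HGDS sz xb sigma hxb cb r1.
have hmono : OPT sz (int_cost sz xb) C sigma <= OPT sz (int_cost sz x) C sigma.
  apply: OPT_mono => q qin; have [h1 h2 h3] := hcond q qin.
  have [s1 _ s3] := hs q qin.
  have [_ r2' _] := round_nat p (x q) hp s3.
  rewrite (ltW h2) /= /int_cost /xb ler_pM2l // ler_nat //.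
have hO : 0 <= OPT sz (int_cost sz xb) C sigma.
  apply: OPT_ge0 => q qin; have [_ h _] := hcond q qin; exact: ltW.
case: sigma hs hcond r1 r2 r3 r4 hxb hG hmono hO => [|q s] hs hcond r1 r2 r3 r4 hxb hG hmono hO.
  have := HGDS sz x [::] (fun q (h : q \in [::]) => False_ind _ (notF h)) 0 (grun_nil _ _ _ _).
  rewrite /CAMP /= -mulrA => h; exact: mulr_ge0 (ltW he) h.
have cbpos : 0 < cb by apply: (r4 q s).
have kpos : 0 < k.
  rewrite ltNge; apply/negP => hk.
  have : k * OPT sz (int_cost sz xb) C (q :: s) <= 0 by rewrite mulr_le0_ge0.
  move=> h; have := lt_le_trans cbpos (le_trans hG h); by rewrite ltxx.
apply: (le_trans r2); rewrite -mulrA ler_wpM2l ?(ltW he) //.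
apply: (le_trans hG); rewrite ler_wpM2l ?(ltW kpos) //.
Qed.
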